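(* Let $a,b,c,a',b',c',d,e,f,g$ be real numbers and let $P=P(a,b,c,a',b',c',d,e,f,g)$ be the $6\times6$ Hermitian matrix defined in the context. Then $P$ is positive semidefinite of rank $2$ if and only if $$a^2+b^2+c^2=1,\quad a'^2+b'^2+c'^2=1,\quad d=aa'+bb'+cc',\quad e=b'c-bc',\quad f=ac'-a'c,\quad g=a'b-ab'.$$ Moreover, in that case $P=QQ^{\mathrm H}$, where $Q$ is the $6\times 2$ matrix $$Q=\begin{pmatrix}1&0\\0&1\\ ci & b+ai\\ -b+ai & -ci\\ c'i & b'+a'i\\ -b'+a'i & -c'i\end{pmatrix}.$$
   Context: $i=\sqrt{-1}$, $\cdot^{\mathrm H}$ is the conjugate transpose. For real $a,b,c,a',b',c',d,e,f,g$, define the $6\times 6$ complex matrix $$P(a,b,c,a',b',c',d,e,f,g)=\begin{pmatrix} 1&0&-ci&-b-ai&-c'i&-b'-a'i\\ 0&1&b-ai&ci&b'-a'i&c'i\\ ci&b+ai&1&0&d-gi&-f-ei\\ -b+ai&-ci&0&1&f-ei&d+gi\\ c'i&b'+a'i&d+gi&f+ei&1&0\\ -b'+a'i&-c'i&-f+ei&d-gi&0&1 \end{pmatrix},$$ which is Hermitian. *)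

(* Defs.v *)
From HB Require Import structures.
From mathcomp Require Import all_boot all_order all_algebra.
From mathcomp Require Import complex.
Set Implicit Arguments. Unset Strict Implicit. Unset Printing Implicit Defensive.
Import Order.TTheory GRing.Theory Num.Theory.
Local Open Scope ring_scope.
Local Open Scope complex_scope.

(* Complex numbers are R[i] = complex R over a real closed field R
   (for R = the real numbers this is the usual field C). *)

Definition conjT (R : rcfType) (m n : nat) (A : 'M[R[i]]_(m, n)) : 'M[R[i]]_(n, m) :=
  (map_mx (@conjc R) A)^T.

(* Hermitian positive semidefinite: A^H = A and v^H A v >= 0 for all v
   (the order on R[i] is the partial order of a numDomain: 0 <= z iff z is
   a nonnegative real). *)
Definition psd (R : rcfType) (n : nat) (A : 'M[R[i]]_n) : Prop :=
  conjT A = A /\ forall v : 'cV[R[i]]_n, 0 <= (conjT v *m A *m v) 0 0.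

Definition mx_of_rows (R : rcfType) (m n : nat) (rows : seq (seq R[i])) : 'M[R[i]]_(m, n) :=
  \matrix_(i < m, j < n) nth 0 (nth [::] rows i) j.

Definition Pmx (R : rcfType) (a b c a' b' c' d e f g : R) : 'M[R[i]]_6 :=
  mx_of_rows 6 6
  [:: [:: 1; 0; 0 -i* c; (-b) -i* a; 0 -i* c'; (-b') -i* a'];
      [:: 0; 1; b -i* a; 0 +i* c; b' -i* a'; 0 +i* c'];
      [:: 0 +i* c; b +i* a; 1; 0; d -i* g; (-f) -i* e];
      [:: (-b) +i* a; 0 -i* c; 0; 1; f -i* e; d +i* g];
      [:: 0 +i* c'; b' +i* a'; d +i* g; f +i* e; 1; 0];
      [:: (-b') +i* a'; 0 -i* c'; (-f) +i* e; d -i* g; 0; 1] ].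

Definition Qmx (R : rcfType) (a b c a' b' c' : R) : 'M[R[i]]_(6, 2) :=
  mx_of_rows 6 2
  [:: [:: 1; 0];
      [:: 0; 1];
      [:: 0 +i* c; b +i* a];
      [:: (-b) +i* a; 0 -i* c];
      [:: 0 +i* c'; b' +i* a'];
      [:: (-b') +i* a'; 0 -i* c'] ].

(* Main.v *)
Require Import Defs.
From HB Require Import structures.
From mathcomp Require Import all_boot all_order all_algebra.
From mathcomp Require Import complex.
From mathcomp Require Import ring lra.
Import Order.TTheory GRing.Theory Num.Theory.
Local Open Scope ring_scope.

Notation o k := (@Ordinal 6 k isT).
Section Helpers.
Local Open Scope complex_scope.

Lemma rank_mxsub (F : fieldType) m n m' n' (f : 'I_m' -> 'I_m) (g : 'I_n' -> 'I_n)
  (A : 'M[F]_(m, n)) : (\rank (mxsub f g A) <= \rank A)%N.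
Proof.
have -> : mxsub f g A = rowsub f A *m colsub g 1%:M.
  by rewrite -mxsub_mul mulmx1.
apply: leq_trans (mxrankM_maxl _ _) _.
by rewrite rowsubE; apply: mxrankM_maxr.
Qed.

Lemma minor3 (F : fieldType) m n (A : 'M[F]_(m, n)) i0 i1 k j0 j1 l :
  A i0 j0 = 1 -> A i0 j1 = 0 -> A i1 j0 = 0 -> A i1 j1 = 1 ->
  (\rank A <= 2)%N -> A k l = A k j0 * A i0 l + A k j1 * A i1 l.
Proof.
move=> h00 h01 h10 h11 hr.
apply/eqP; rewrite -subr_eq0; apply/negPn/negP => hd.
set f := fun i : 'I_3 => nth i0 [:: i0; i1; k] i.
set g := fun j : 'I_3 => nth j0 [:: j0; j1; l] j.
set M := mxsub f g A.
set u := A i0 l; set v := A i1 l; set x := A k j0; set y := A k j1; set z := A k l.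
set dl := z - (x * u + y * v).
have Md : dl != 0 by [].
have hz : z = dl + (x * u + y * v) by rewrite /dl subrK.
clearbody dl.
set N : 'M[F]_3 := \matrix_(i, j) nth 0 (nth [::] [:: [:: 1 + u * x / dl; u * y / dl; - u / dl];
   [:: v * x / dl; 1 + v * y / dl; - v / dl]; [:: - x / dl; - y / dl; 1 / dl]] i) j.
have MN : M *m N = 1%:M.
  apply/matrixP => p q; rewrite !mxE !big_ord_recr big_ord0 /= !mxE.
  case: p => [[|[|[|p]]] hp] //=; case: q => [[|[|[|q]]] hq] //=;
  rewrite /f /g /= ?h00 ?h01 ?h10 ?h11 -/u -/v -/x -/y -/z; rewrite ?hz; try (field; exact: Md).
have := mxrank_unit (proj1 (mulmx1_unit MN)).
move=> h3; have := @rank_mxsub F m n 3 3 f g A; rewrite -/M h3 => h; have := leq_trans h hr.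
done.
Qed.

Lemma conjT_mul (R : rcfType) m n p (A : 'M[R[i]]_(m, n)) (B : 'M[R[i]]_(n, p)) :
  conjT (A *m B) = conjT B *m conjT A.
Proof. by rewrite /conjT map_mxM trmx_mul. Qed.

Lemma conjTK (R : rcfType) m n (A : 'M[R[i]]_(m, n)) : conjT (conjT A) = A.
Proof. by apply/matrixP => i j; rewrite /conjT !mxE conjcK. Qed.



Lemma PQ_eq (R : rcfType) (a b c a' b' c' d e f g : R) :
  (a ^+ 2 + b ^+ 2 + c ^+ 2 = 1 /\ a' ^+ 2 + b' ^+ 2 + c' ^+ 2 = 1 /\
       d = a * a' + b * b' + c * c' /\ e = b' * c - b * c' /\
       f = a * c' - a' * c /\ g = a' * b - a * b') ->
   Pmx a b c a' b' c' d e f g = Qmx a b c a' b' c' *m conjT (Qmx a b c a' b' c').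
Proof.
move=> [H1 [H2 [-> [-> [-> ->]]]]].
apply/matrixP => i j; rewrite /Qmx /Pmx /mx_of_rows /conjT !mxE !big_ord_recr big_ord0 /= !mxE.
case: i => [[|[|[|[|[|[|i]]]]]] hi] //=; case: j => [[|[|[|[|[|[|j]]]]]] hj] //=;
  simpc; congr Complex; lra.
Qed.


Lemma fwd (R : rcfType) (a b c a' b' c' d e f g : R) :
  (\rank (Pmx a b c a' b' c' d e f g) <= 2)%N ->
  (a ^+ 2 + b ^+ 2 + c ^+ 2 = 1 /\ a' ^+ 2 + b' ^+ 2 + c' ^+ 2 = 1 /\
       d = a * a' + b * b' + c * c' /\ e = b' * c - b * c' /\
       f = a * c' - a' * c /\ g = a' * b - a * b').
Proof.
set P := Pmx a b c a' b' c' d e f g => hr.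
have h00 : P (o 0) (o 0) = 1 by rewrite /P /Pmx /mx_of_rows !mxE.
have h01 : P (o 0) (o 1) = 0 by rewrite /P /Pmx /mx_of_rows !mxE.
have h10 : P (o 1) (o 0) = 0 by rewrite /P /Pmx /mx_of_rows !mxE.
have h11 : P (o 1) (o 1) = 1 by rewrite /P /Pmx /mx_of_rows !mxE.
have E22 := @minor3 _ _ _ P (o 0) (o 1) (o 2) (o 0) (o 1) (o 2) h00 h01 h10 h11 hr.
have E44 := @minor3 _ _ _ P (o 0) (o 1) (o 4) (o 0) (o 1) (o 4) h00 h01 h10 h11 hr.
have E24 := @minor3 _ _ _ P (o 0) (o 1) (o 2) (o 0) (o 1) (o 4) h00 h01 h10 h11 hr.
have E25 := @minor3 _ _ _ P (o 0) (o 1) (o 2) (o 0) (o 1) (o 5) h00 h01 h10 h11 hr.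
move: E22 E44 E24 E25; rewrite /P /Pmx /mx_of_rows !mxE /=; simpc.
case=> h1 _; case=> h2 _; case=> h3 h4; case=> h5 h6.
split; first lra. split; first lra. split; first lra. split; first lra.
split; lra.
Qed.

End Helpers.

Theorem mainTheorem3 (R : rcfType) (a b c a' b' c' d e f g : R) :
  ((psd (Pmx a b c a' b' c' d e f g) /\ \rank (Pmx a b c a' b' c' d e f g) = 2%N)
   <->
   (a ^+ 2 + b ^+ 2 + c ^+ 2 = 1 /\ a' ^+ 2 + b' ^+ 2 + c' ^+ 2 = 1 /\
       d = a * a' + b * b' + c * c' /\ e = b' * c - b * c' /\
       f = a * c' - a' * c /\ g = a' * b - a * b'))
  /\
  ((a ^+ 2 + b ^+ 2 + c ^+ 2 = 1 /\ a' ^+ 2 + b' ^+ 2 + c' ^+ 2 = 1 /\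
       d = a * a' + b * b' + c * c' /\ e = b' * c - b * c' /\
       f = a * c' - a' * c /\ g = a' * b - a * b') ->
   Pmx a b c a' b' c' d e f g = Qmx a b c a' b' c' *m conjT (Qmx a b c a' b' c')).
Proof.
split; last exact: PQ_eq.
split.
  by move=> [_ hr]; apply: fwd; rewrite hr.
move=> H; have PQ := @PQ_eq R a b c a' b' c' d e f g H.
set P := Pmx a b c a' b' c' d e f g in PQ *.
set Q := Qmx a b c a' b' c' in PQ.
split; [split|].
- by rewrite PQ conjT_mul conjTK.
- move=> v; rewrite PQ.
  have -> : conjT v *m (Q *m conjT Q) *m v = conjT (conjT Q *m v) *m (conjT Q *m v).
    by rewrite conjT_mul conjTK !mulmxA.
  rewrite !mxE; apply: sumr_ge0 => j _.
  by rewrite /conjT !mxE mulrC; apply: mulcJ_ge0.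
- apply/anti_leq/andP; split.
    rewrite PQ; apply: leq_trans (mxrankM_maxr _ _) _; exact: rank_leq_row.
  set h := fun i : 'I_2 => nth (o 0) [:: o 0; o 1] i.
  apply: leq_trans (@rank_mxsub _ 6 6 2 2 h h P).
  have -> : mxsub h h P = (1%:M : 'M[R[i]]_2).
    apply/matrixP => p q; rewrite /P /Pmx /mx_of_rows !mxE.
    by case: p => [[|[|p]] hp] //=; case: q => [[|[|q]] hq].
  by rewrite mxrank1.
Qed.
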